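(* Consider the planar system $$\frac{dN}{dt}=rN\left(1-\frac{N}{K}-\frac{h}{w+N}\right)-\frac{aNP}{b+N^2},\qquad \frac{dP}{dt}=\frac{cNP}{b+N^2}-\delta P,$$ where $r,K,h,w,a,b,c,\delta$ are positive constants with $w<K$. Let $D_2=c^2-4b\delta^2$, $N_4=\frac{c+\sqrt{D_2}}{2\delta}$, $N_5=\frac{c-\sqrt{D_2}}{2\delta}$, $N_6=\frac{c}{2\delta}$, and for $N>0$ let $$P(N)=\frac{r(b+N^2)\left[(K-w)N-K(h-w)-N^2\right]}{Ka(w+N)}.$$ (i) If $b>\left(\frac{c}{2\delta}\right)^2$, then there are no coexistence equilibrium points. (ii) If $b=\left(\frac{c}{2\delta}\right)^2$ and $P(N_6)>0$, then there is exactly one coexistence equilibrium point, namely $E_6=(N_6,P(N_6))$. (iii) If $b<\left(\frac{c}{2\delta}\right)^2$, $P(N_4)>0$ and $P(N_5)>0$, then there are two coexistence equilibrium points, namely $E_4=(N_4,P(N_4))$ and $E_5=(N_5,P(N_5))$.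
   Context: $N(t)$ is the prey density and $P(t)$ the predator density. A coexistence equilibrium point is an equilibrium $(N,P)$ of the system with $N>0$ and $P>0$. *)

(* Defs.v *)
From Stdlib Require Import Reals.
Open Scope R_scope.

Definition fN (r K h w a b : R) (N P : R) : R :=
  r * N * (1 - N / K - h / (w + N)) - a * N * P / (b + N ^ 2).

Definition fP (b c delta : R) (N P : R) : R :=
  c * N * P / (b + N ^ 2) - delta * P.

Definition is_equilibrium (r K h w a b c delta : R) (N P : R) : Prop :=
  fN r K h w a b N P = 0 /\ fP b c delta N P = 0.

Definition is_coexistence_eq (r K h w a b c delta : R) (N P : R) : Prop :=
  0 < N /\ 0 < P /\ is_equilibrium r K h w a b c delta N P.

Definition D2 (b c delta : R) : R := c ^ 2 - 4 * b * delta ^ 2.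
Definition N4 (b c delta : R) : R := (c + sqrt (D2 b c delta)) / (2 * delta).
Definition N5 (b c delta : R) : R := (c - sqrt (D2 b c delta)) / (2 * delta).
Definition N6 (c delta : R) : R := c / (2 * delta).

Definition Pfun (r K h w a b : R) (N : R) : R :=
  r * (b + N ^ 2) * ((K - w) * N - K * (h - w) - N ^ 2) / (K * a * (w + N)).

(* Main.v *)
Require Import Defs.
From Stdlib Require Import Reals Lra Psatz.
Open Scope R_scope.

Lemma fP_iff b c delta N P : 0 < N -> 0 < P -> 0 < b ->
  (fP b c delta N P = 0 <-> delta * N ^ 2 - c * N + delta * b = 0).
Proof.
  intros hN hP hb. assert (hB : 0 < b + N ^ 2) by nra.
  assert (E : fP b c delta N P = P * (-(delta * N ^ 2 - c * N + delta * b)) / (b + N ^ 2)).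
  { unfold fP. field. lra. }
  rewrite E. split; intro H.
  - assert (H2 : P * (-(delta * N ^ 2 - c * N + delta * b)) = 0).
    { apply (Rmult_eq_reg_r (/ (b + N^2))). rewrite Rmult_0_l. exact H.
      apply Rgt_not_eq, Rinv_0_lt_compat; lra. }
    apply Rmult_integral in H2. lra.
  - rewrite H. field. lra.
Qed.

Lemma fN_iff r K h w a b N P : 0 < N -> 0 < b -> 0 < w -> 0 < K -> 0 < a ->
  (fN r K h w a b N P = 0 <-> P = Pfun r K h w a b N).
Proof.
  intros hN hb hw hK ha. assert (hB : 0 < b + N ^ 2) by nra.
  assert (E : fN r K h w a b N P = (a * N / (b + N ^ 2)) * (Pfun r K h w a b N - P)).
  { unfold fN, Pfun. field. lra. }
  assert (hc : 0 < a * N / (b + N ^ 2)).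
  { apply Rdiv_lt_0_compat; nra. }
  rewrite E. split; intro H.
  - apply Rmult_integral in H. lra.
  - rewrite H. ring.
Qed.

Lemma coex_iff r K h w a b c delta N P : 0 < b -> 0 < w -> 0 < K -> 0 < a ->
  (is_coexistence_eq r K h w a b c delta N P <->
   0 < N /\ 0 < P /\ delta * N ^ 2 - c * N + delta * b = 0 /\ P = Pfun r K h w a b N).
Proof.
  intros hb hw hK ha. unfold is_coexistence_eq, is_equilibrium. split.
  - intros [hN [hP [H1 H2]]]. repeat split; auto.
    + apply (fP_iff b c delta N P); auto.
    + apply (fN_iff r K h w a b N P); auto.
  - intros [hN [hP [H1 H2]]]. repeat split; auto.
    + apply (fN_iff r K h w a b N P); auto.
    + apply (fP_iff b c delta N P); auto.
Qed.

Theorem theorem3 (r K h w a b c delta : R)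
  (hr : 0 < r) (hK : 0 < K) (hh : 0 < h) (hw : 0 < w) (ha : 0 < a)
  (hb : 0 < b) (hc : 0 < c) (hdelta : 0 < delta) (hwK : w < K) :
  (* (i) *)
  (b > (c / (2 * delta)) ^ 2 ->
     forall N P, ~ is_coexistence_eq r K h w a b c delta N P) /\
  (* (ii) *)
  (b = (c / (2 * delta)) ^ 2 -> Pfun r K h w a b (N6 c delta) > 0 ->
     forall N P, is_coexistence_eq r K h w a b c delta N P <->
       (N = N6 c delta /\ P = Pfun r K h w a b (N6 c delta))) /\
  (* (iii) *)
  (b < (c / (2 * delta)) ^ 2 ->
     Pfun r K h w a b (N4 b c delta) > 0 -> Pfun r K h w a b (N5 b c delta) > 0 ->
     N4 b c delta <> N5 b c delta /\
     forall N P, is_coexistence_eq r K h w a b c delta N P <->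
       ((N = N4 b c delta /\ P = Pfun r K h w a b (N4 b c delta)) \/
        (N = N5 b c delta /\ P = Pfun r K h w a b (N5 b c delta)))).
Proof.
  set (m := c / (2 * delta)).
  assert (hcm : c = 2 * delta * m) by (unfold m; field; lra).
  assert (hm : 0 < m) by (unfold m; apply Rdiv_lt_0_compat; lra).
  assert (Q : forall N, delta * N ^ 2 - c * N + delta * b
                = delta * ((N - m) ^ 2 + (b - m ^ 2))) by (intro; rewrite hcm; ring).
  split; [|split].
  - intros Hb N P H. apply coex_iff in H; auto.
    destruct H as [_ [_ [H _]]]. rewrite Q in H.
    assert (Hp : 0 < (N - m) ^ 2 + (b - m ^ 2)) by (pose proof (pow2_ge_0 (N - m)); unfold Rgt in Hb; lra).
    pose proof (Rmult_lt_0_compat _ _ hdelta Hp). lra.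
  - intros Hb HP N P. rewrite coex_iff; auto.
    assert (E6 : N6 c delta = m) by reflexivity. rewrite E6 in *.
    split.
    + intros [hN [hP [H1 H2]]]. rewrite Q in H1.
      assert (HN : (N - m) ^ 2 = 0) by nra.
      assert (N = m) by nra. subst N. auto.
    + intros [-> ->]. split; [lra|split; [lra|split; [|reflexivity]]].
      rewrite Q, <- Hb. ring.
  - intros Hb H4 H5.
    assert (hD : 0 < D2 b c delta).
    { unfold D2. rewrite hcm.
      replace ((2 * delta * m) ^ 2 - 4 * b * delta ^ 2) with ((4 * (delta * delta)) * (m ^ 2 - b)) by ring.
      apply Rmult_lt_0_compat; [|lra]. pose proof (Rmult_lt_0_compat _ _ hdelta hdelta). lra. }
    set (s := sqrt (D2 b c delta)) in *.
    assert (hs : 0 < s) by (apply sqrt_lt_R0; exact hD).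
    assert (hs2 : s * s = D2 b c delta) by (apply sqrt_sqrt; lra).
    assert (hsc : s < c).
    { unfold D2 in hs2. destruct (Rlt_or_le s c) as [|Hle]; auto.
      pose proof (Rmult_le_compat _ _ _ _ (Rlt_le _ _ hc) (Rlt_le _ _ hc) Hle Hle).
      pose proof (Rmult_lt_0_compat _ _ hdelta hdelta).
      pose proof (Rmult_lt_0_compat _ _ hb H0). exfalso. simpl in hs2. lra. }
    assert (E4 : N4 b c delta = (c + s) / (2 * delta)) by reflexivity.
    assert (E5 : N5 b c delta = (c - s) / (2 * delta)) by reflexivity.
    assert (p4 : 0 < N4 b c delta) by (rewrite E4; apply Rdiv_lt_0_compat; lra).
    assert (p5 : 0 < N5 b c delta) by (rewrite E5; apply Rdiv_lt_0_compat; lra).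
    assert (F : forall N, delta * N ^ 2 - c * N + delta * b
        = delta * ((N - N4 b c delta) * (N - N5 b c delta))).
    { intro N. rewrite E4, E5. unfold D2 in hs2.
      assert (b = (c * c - s * s) / (4 * delta * delta)) by (rewrite hs2; field; lra).
      rewrite H. field. lra. }
    split.
    + rewrite E4, E5. intro H. apply (Rmult_eq_compat_r (2 * delta)) in H.
      field_simplify in H; lra.
    + intros N P. rewrite coex_iff; auto. rewrite F. split.
      * intros [hN [hP [H1 H2]]].
        apply Rmult_integral in H1. destruct H1 as [H1|H1]; [lra|].
        apply Rmult_integral in H1. destruct H1 as [H1|H1].
        -- left. split; [lra|]. subst P. f_equal. lra.
        -- right. split; [lra|]. subst P. f_equal. lra.
      * intros [[-> ->]|[-> ->]]; repeat split; try lra; ring.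
Qed.
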